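(* Let $T\subset\mathbb{R}^2$ be (the open domain bounded by) a triangle with angles $\alpha\le\beta\le\gamma$. Then \[ A_T\ge\frac{1}{\sin\frac{\alpha}{2}}+\frac{1}{\sin\frac{\beta}{2}}. \]
   Context: For a domain $G\subsetneq\mathbb{R}^n$ let $d_G(x)=d(x,\partial G)$. The quasihyperbolic length of a rectifiable curve $\gamma\subset G$ is $\ell_k(\gamma)=\int_\gamma\frac{|dx|}{d_G(x)}$, and the quasihyperbolic distance is $k_G(x,y)=\inf\ell_k(\gamma)$ over rectifiable curves $\gamma\subset G$ joining $x$ and $y$. The distance ratio metric is $j_G(x,y)=\log\left(1+\frac{|x-y|}{\min\{d_G(x),d_G(y)\}}\right)$. The uniformity constant is $A_G=\inf\{A\ge1: k_G(x,y)\le A\,j_G(x,y)\text{ for all }x,y\in G\}$ (with $\inf\emptyset=+\infty$); $G$ is uniform if $A_G<\infty$. *)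

(* Defs.v *)
From Stdlib Require Import Reals Lra ClassicalEpsilon.
Open Scope R_scope.

Definition pt := (R * R)%type.
Definition dist (x y : pt) : R :=
  sqrt ((fst x - fst y) ^ 2 + (snd x - snd y) ^ 2).

(** Supremum / infimum of a set of reals (chosen via classical epsilon;
    they are meaningful whenever the sup / inf exists). *)
Definition is_glb (E : R -> Prop) (m : R) : Prop :=
  (forall x, E x -> m <= x) /\ (forall b, (forall x, E x -> b <= x) -> b <= m).
Definition Rsup (E : R -> Prop) : R := epsilon (inhabits 0) (fun m => is_lub E m).
Definition Rinf (E : R -> Prop) : R := epsilon (inhabits 0) (fun m => is_glb E m).

Fixpoint rsum (n : nat) (f : nat -> R) : R :=
  match n with O => 0 | S k => rsum k f + f k end.

(** A domain is a subset of the plane. Boundary of G: closure minus G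
    (this is the topological boundary for open G). *)
Definition boundary (G : pt -> Prop) (y : pt) : Prop :=
  (forall eps, 0 < eps -> exists z, G z /\ dist y z < eps) /\ ~ G y.

Definition dG (G : pt -> Prop) (x : pt) : R :=
  Rinf (fun r => exists y, boundary G y /\ r = dist x y).

Definition partition (a b : R) (n : nat) (p : nat -> R) : Prop :=
  p O = a /\ p n = b /\ forall i, (i < n)%nat -> p i <= p (S i).

Definition curve_continuous (g : R -> pt) : Prop :=
  forall t, 0 <= t <= 1 -> forall eps, 0 < eps ->
    exists delta, 0 < delta /\
      forall s, 0 <= s <= 1 -> Rabs (s - t) < delta -> dist (g s) (g t) < eps.

Definition chord_sum (g : R -> pt) (n : nat) (p : nat -> R) : R :=
  rsum n (fun i => dist (g (p i)) (g (p (S i)))).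

Definition arclen (g : R -> pt) (a b : R) : R :=
  Rsup (fun L => exists n p, partition a b n p /\ L = chord_sum g n p).

Definition rectifiable (g : R -> pt) : Prop :=
  exists M, forall n p, partition 0 1 n p -> chord_sum g n p <= M.

(** Line integral w.r.t. arc length of f along gamma on [0,1], defined as
    the (lower) Riemann–Stieltjes integral with respect to arc length:
    sup over partitions of sum_i (inf_{[t_i,t_{i+1}]} f o gamma) * length(gamma|[t_i,t_{i+1}]).
    For continuous f this is the usual integral  int_gamma f |dx|. *)
Definition line_integral (f : pt -> R) (g : R -> pt) : R :=
  Rsup (fun Sm => exists n p, partition 0 1 n p /\
     Sm = rsum n (fun i =>
           Rinf (fun v => exists t, p i <= t <= p (S i) /\ v = f (g t))
           * arclen g (p i) (p (S i)))).

Definition qh_length (G : pt -> Prop) (g : R -> pt) : R :=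
  line_integral (fun x => / dG G x) g.

Definition joins_in (G : pt -> Prop) (x y : pt) (g : R -> pt) : Prop :=
  curve_continuous g /\ rectifiable g /\ g 0 = x /\ g 1 = y /\
  forall t, 0 <= t <= 1 -> G (g t).

Definition kG (G : pt -> Prop) (x y : pt) : R :=
  Rinf (fun L => exists g, joins_in G x y g /\ L = qh_length G g).

Definition jG (G : pt -> Prop) (x y : pt) : R :=
  ln (1 + dist x y / Rmin (dG G x) (dG G y)).

(** A is admissible in the definition of A_G = inf{A >= 1 : k_G <= A j_G}. *)
Definition uniformity_admissible (G : pt -> Prop) (A : R) : Prop :=
  1 <= A /\ forall x y, G x -> G y -> kG G x y <= A * jG G x y.

(** "A_G >= c", i.e. c is a lower bound of the admissible set
    (with inf of the empty set = +infinity this is exactly A_G >= c). *)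
Definition uniformity_const_ge (G : pt -> Prop) (c : R) : Prop :=
  forall A, uniformity_admissible G A -> c <= A.

Definition cross (a b c : pt) : R :=
  (fst b - fst a) * (snd c - snd a) - (snd b - snd a) * (fst c - fst a).

Definition open_triangle (a b c : pt) (x : pt) : Prop :=
  exists l1 l2 l3, 0 < l1 /\ 0 < l2 /\ 0 < l3 /\ l1 + l2 + l3 = 1 /\
    fst x = l1 * fst a + l2 * fst b + l3 * fst c /\
    snd x = l1 * snd a + l2 * snd b + l3 * snd c.

Definition angle_at (a b c : pt) : R :=
  acos (((fst b - fst a) * (fst c - fst a) + (snd b - snd a) * (snd c - snd a))
        / (dist a b * dist a c)).

(* Main.v *)
From Stdlib Require Import Reals Lra Lia Psatz ClassicalEpsilon Classical FunctionalExtensionality PropExtensionality.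
Require Import Defs.
Open Scope R_scope.

Lemma sqrt_le_sq u S : 0 <= S -> u <= S * S -> sqrt u <= S.
Proof. intros H1 H2. rewrite <- (sqrt_square S) by exact H1. apply sqrt_le_1_alt. exact H2. Qed.

Lemma dist_ge0 x y : 0 <= dist x y.
Proof. apply sqrt_pos. Qed.

Lemma dist_sq x y : dist x y * dist x y = (fst x - fst y) ^ 2 + (snd x - snd y) ^ 2.
Proof. unfold dist. apply sqrt_sqrt. apply Rplus_le_le_0_compat; apply pow2_ge_0. Qed.

Lemma dist_sym x y : dist x y = dist y x.
Proof. unfold dist. f_equal. ring. Qed.

Lemma dist_refl x : dist x x = 0.
Proof. unfold dist. replace ((fst x - fst x) ^ 2 + (snd x - snd x) ^ 2) with 0 by ring. apply sqrt_0. Qed.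

Lemma dist_tri x y z : dist x z <= dist x y + dist y z.
Proof.
  pose proof (dist_ge0 x y). pose proof (dist_ge0 y z).
  unfold dist at 1. apply sqrt_le_sq. lra.
  pose proof (dist_sq x y) as E1. pose proof (dist_sq y z) as E2.
  pose proof (sqrt_cauchy (fst x - fst y) (snd x - snd y) (fst y - fst z) (snd y - snd z)) as C.
  assert (sqrt ((fst x - fst y)² + (snd x - snd y)²) = dist x y) as F1
    by (unfold dist, Rsqr; f_equal; ring).
  assert (sqrt ((fst y - fst z)² + (snd y - snd z)²) = dist y z) as F2
    by (unfold dist, Rsqr; f_equal; ring).
  rewrite F1, F2 in C. nra.
Qed.

Lemma dist_fst x y : Rabs (fst x - fst y) <= dist x y.
Proof.
  rewrite <- sqrt_Rsqr_abs. unfold dist. apply sqrt_le_1_alt. unfold Rsqr. pose proof (pow2_ge_0 (snd x - snd y)). pose proof (pow2_ge_0 (fst x - fst y)). nra.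
Qed.
Lemma dist_snd x y : Rabs (snd x - snd y) <= dist x y.
Proof.
  rewrite <- sqrt_Rsqr_abs. unfold dist. apply sqrt_le_1_alt. unfold Rsqr. pose proof (pow2_ge_0 (snd x - snd y)). pose proof (pow2_ge_0 (fst x - fst y)). nra.
Qed.

Lemma aff_bound (p q : pt) be ga :
  Rabs (be * (fst p - fst q) + ga * (snd p - snd q)) <= (Rabs be + Rabs ga) * dist p q.
Proof.
  eapply Rle_trans. apply Rabs_triang. rewrite !Rabs_mult.
  pose proof (dist_fst p q). pose proof (dist_snd p q).
  pose proof (Rabs_pos be). pose proof (Rabs_pos ga). nra.
Qed.

Definition lerp (u v : pt) (t : R) : pt :=
  (fst u + t * (fst v - fst u), snd u + t * (snd v - snd u)).

Lemma dist_lerp2 u v s t : dist (lerp u v s) (lerp u v t) = Rabs (s - t) * dist u v.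
Proof.
  unfold dist, lerp; cbn [fst snd].
  replace ((fst u + s * (fst v - fst u) - (fst u + t * (fst v - fst u))) ^ 2 +
   (snd u + s * (snd v - snd u) - (snd u + t * (snd v - snd u))) ^ 2)
  with (Rsqr (s - t) * ((fst u - fst v) ^ 2 + (snd u - snd v) ^ 2)) by (unfold Rsqr; ring).
  rewrite sqrt_mult_alt by apply Rle_0_sqr. rewrite sqrt_Rsqr_abs. reflexivity.
Qed.

Lemma lerp0 u v : lerp u v 0 = u.
Proof. unfold lerp. destruct u; simpl. f_equal; ring. Qed.
Lemma lerp1 u v : lerp u v 1 = v.
Proof. unfold lerp. destruct v; simpl. f_equal; ring. Qed.

Lemma dist_lerp u v t : dist u (lerp u v t) = Rabs t * dist u v.
Proof. rewrite <- (lerp0 u v) at 1. rewrite dist_lerp2. rewrite Rminus_0_l, Rabs_Ropp. reflexivity. Qed.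

Lemma glb_exists (E : R -> Prop) :
  (exists x, E x) -> (exists m, forall x, E x -> m <= x) -> is_glb E (Rinf E).
Proof.
  intros [x0 H0] [m Hm].
  assert (exists m, is_glb E m) as Ex.
  { destruct (completeness (fun y => E (- y))) as [l Hl].
    - exists (- m). intros y Hy. apply Hm in Hy. lra.
    - exists (- x0). rewrite Ropp_involutive. exact H0.
    - exists (- l). destruct Hl as [H1 H2]. split.
      + intros x Hx. assert (- x <= l). { apply H1. rewrite Ropp_involutive. exact Hx. } lra.
      + intros b Hb. assert (l <= - b). { apply H2. intros y Hy. apply Hb in Hy. lra. } lra. }
  unfold Rinf. apply epsilon_spec. exact Ex.
Qed.

Lemma lub_exists (E : R -> Prop) :
  (exists x, E x) -> (exists m, forall x, E x -> x <= m) -> is_lub E (Rsup E).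
Proof.
  intros H0 [m Hm].
  assert (exists m, is_lub E m) as Ex.
  { destruct (completeness E) as [l Hl]. exists m. exact Hm. exact H0. exists l. exact Hl. }
  unfold Rsup. apply epsilon_spec. exact Ex.
Qed.

Lemma Rinf_le E x : (exists m, forall x, E x -> m <= x) -> E x -> Rinf E <= x.
Proof. intros Hb Hx. destruct (glb_exists E (ex_intro _ x Hx) Hb) as [H _]. auto. Qed.

Lemma Rinf_ge E b : (exists x, E x) -> (forall x, E x -> b <= x) -> b <= Rinf E.
Proof. intros Hn Hb. destruct (glb_exists E Hn (ex_intro _ b Hb)) as [_ H]. auto. Qed.

Lemma Rsup_ge E x : (exists m, forall x, E x -> x <= m) -> E x -> x <= Rsup E.
Proof. intros Hb Hx. destruct (lub_exists E (ex_intro _ x Hx) Hb) as [H _]. auto. Qed.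

Lemma Rsup_le E b : (exists x, E x) -> (forall x, E x -> x <= b) -> Rsup E <= b.
Proof. intros Hn Hb. destruct (lub_exists E Hn (ex_intro _ b Hb)) as [_ H]. auto. Qed.

Lemma Rabs_le_inv x e : Rabs x <= e -> - e <= x <= e.
Proof. intros H. pose proof (Rle_abs x). pose proof (Rle_abs (- x)). rewrite Rabs_Ropp in *. lra. Qed.

Definition lam1 (a b c x : pt) := cross x b c / cross a b c.
Definition lam2 (a b c x : pt) := cross a x c / cross a b c.
Definition lam3 (a b c x : pt) := cross a b x / cross a b c.
Definition mk (a b c : pt) (m1 m2 m3 : R) : pt :=
  (m1 * fst a + m2 * fst b + m3 * fst c, m1 * snd a + m2 * snd b + m3 * snd c).
Definition mlam a b c x := Rmin (lam1 a b c x) (Rmin (lam2 a b c x) (lam3 a b c x)).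

Lemma G_iff a b c x : cross a b c <> 0 ->
  (open_triangle a b c x <-> 0 < lam1 a b c x /\ 0 < lam2 a b c x /\ 0 < lam3 a b c x).
Proof.
  intro HD. split.
  - intros (l1 & l2 & l3 & H1 & H2 & H3 & Hs & Hx & Hy).
    assert (cross x b c = l1 * cross a b c) as E1
      by (unfold cross; rewrite Hx, Hy; replace l3 with (1 - l1 - l2) by lra; ring).
    assert (cross a x c = l2 * cross a b c) as E2
      by (unfold cross; rewrite Hx, Hy; replace l3 with (1 - l1 - l2) by lra; ring).
    assert (cross a b x = l3 * cross a b c) as E3
      by (unfold cross; rewrite Hx, Hy; replace l1 with (1 - l3 - l2) by lra; ring).
    assert (lam1 a b c x = l1) by (unfold lam1; rewrite E1; field; auto).
    assert (lam2 a b c x = l2) by (unfold lam2; rewrite E2; field; auto).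
    assert (lam3 a b c x = l3) by (unfold lam3; rewrite E3; field; auto).
    lra.
  - intros (H1 & H2 & H3). exists (lam1 a b c x), (lam2 a b c x), (lam3 a b c x).
    unfold lam1, lam2, lam3 in *. unfold cross in *.
    repeat split; auto; field; auto.
Qed.

Lemma lam_mk a b c m1 m2 m3 : cross a b c <> 0 -> m1 + m2 + m3 = 1 ->
  lam1 a b c (mk a b c m1 m2 m3) = m1 /\ lam2 a b c (mk a b c m1 m2 m3) = m2 /\
  lam3 a b c (mk a b c m1 m2 m3) = m3.
Proof.
  intros HD Hs. unfold lam1, lam2, lam3, mk. unfold cross in *; cbn [fst snd].
  replace m3 with (1 - m1 - m2) by lra.
  repeat split; field; auto.
Qed.

Lemma G_mk a b c m1 m2 m3 : 0 < m1 -> 0 < m2 -> 0 < m3 -> m1 + m2 + m3 = 1 ->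
  open_triangle a b c (mk a b c m1 m2 m3).
Proof. intros. exists m1, m2, m3. unfold mk; cbn [fst snd]. repeat split; auto. Qed.

Lemma notG_mk a b c m1 m2 m3 : cross a b c <> 0 -> m1 + m2 + m3 = 1 ->
  (m1 = 0 \/ m2 = 0 \/ m3 = 0) -> ~ open_triangle a b c (mk a b c m1 m2 m3).
Proof.
  intros HD Hs Hz HG. apply (G_iff a b c _ HD) in HG.
  destruct (lam_mk a b c m1 m2 m3 HD Hs) as (E1 & E2 & E3).
  rewrite E1, E2, E3 in HG. lra.
Qed.

Definition cen a b c := mk a b c (1/3) (1/3) (1/3).

Lemma boundary_mk a b c m1 m2 m3 : cross a b c <> 0 -> 0 <= m1 -> 0 <= m2 -> 0 <= m3 ->
  m1 + m2 + m3 = 1 -> (m1 = 0 \/ m2 = 0 \/ m3 = 0) ->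
  boundary (open_triangle a b c) (mk a b c m1 m2 m3).
Proof.
  intros HD H1 H2 H3 Hs Hz. split; [| apply notG_mk; auto].
  intros eps He. set (p := mk a b c m1 m2 m3).
  set (d := dist p (cen a b c)).
  assert (0 <= d) by apply dist_ge0.
  set (eta := Rmin 1 (eps / (2 * (d + 1)))).
  assert (0 < eps / (2 * (d + 1))) by (apply Rdiv_lt_0_compat; lra).
  assert (0 < eta) by (unfold eta; apply Rmin_glb_lt; lra).
  assert (eta <= 1) by apply Rmin_l.
  assert (eta <= eps / (2 * (d + 1))) as Heta by apply Rmin_r.
  exists (lerp p (cen a b c) eta). split.
  - exists ((1 - eta) * m1 + eta / 3), ((1 - eta) * m2 + eta / 3), ((1 - eta) * m3 + eta / 3).
    repeat split; try nra.
    + unfold lerp, p, cen, mk; cbn [fst snd]. field.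
    + unfold lerp, p, cen, mk; cbn [fst snd]. field.
  - rewrite dist_lerp. fold d. rewrite Rabs_pos_eq by lra.
    assert (eta * (2 * (d + 1)) <= eps).
    { apply (Rmult_le_compat_r (2 * (d + 1))) in Heta; [|lra].
      unfold Rdiv in Heta. rewrite Rmult_assoc, Rinv_l in Heta by lra. lra. }
    nra.
Qed.

Lemma dG_le a b c z y : boundary (open_triangle a b c) y -> dG (open_triangle a b c) z <= dist z y.
Proof.
  intros Hy. unfold dG. apply Rinf_le.
  - exists 0. intros r (y' & _ & ->). apply dist_ge0.
  - exists y. auto.
Qed.

Definition Kt a b c :=
  (Rabs (snd b - snd c) + Rabs (fst c - fst b) + Rabs (snd c - snd a) + Rabs (fst a - fst c)
   + Rabs (snd a - snd b) + Rabs (fst b - fst a)) / Rabs (cross a b c) + 1.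

Lemma Kt_pos a b c : cross a b c <> 0 -> 1 <= Kt a b c.
Proof.
  intros HD. unfold Kt. assert (0 < Rabs (cross a b c)) by (apply Rabs_pos_lt; auto).
  assert (0 <= (Rabs (snd b - snd c) + Rabs (fst c - fst b) + Rabs (snd c - snd a) + Rabs (fst a - fst c)
   + Rabs (snd a - snd b) + Rabs (fst b - fst a)) / Rabs (cross a b c)).
  { unfold Rdiv; apply Rmult_le_pos; [|left; apply Rinv_0_lt_compat; auto]. pose proof (Rabs_pos (snd b - snd c)).
    pose proof (Rabs_pos (fst c - fst b)). pose proof (Rabs_pos (snd c - snd a)).
    pose proof (Rabs_pos (fst a - fst c)). pose proof (Rabs_pos (snd a - snd b)).
    pose proof (Rabs_pos (fst b - fst a)). lra. }
  lra.
Qed.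

Lemma lip_helper X D S be ga (w z : pt) : D <> 0 ->
  X = (be * (fst w - fst z) + ga * (snd w - snd z)) / D -> Rabs be + Rabs ga <= S ->
  Rabs X <= S / Rabs D * dist w z.
Proof.
  intros HD -> HS. assert (0 < Rabs D) by (apply Rabs_pos_lt; auto).
  unfold Rdiv. rewrite Rabs_mult, Rabs_inv.
  pose proof (aff_bound w z be ga). pose proof (dist_ge0 w z).
  pose proof (Rinv_0_lt_compat _ H).
  apply Rle_trans with ((Rabs be + Rabs ga) * dist w z * / Rabs D).
  - apply Rmult_le_compat_r; lra.
  - apply Rmult_le_compat_r with (r := / Rabs D) in HS; [|lra]. nra.
Qed.

Lemma lam_lip a b c w z : cross a b c <> 0 ->
  Rabs (lam1 a b c w - lam1 a b c z) <= (Kt a b c - 1) * dist w z /\ Rabs (lam2 a b c w - lam2 a b c z) <= (Kt a b c - 1) * dist w z /\ Rabs (lam3 a b c w - lam3 a b c z) <= (Kt a b c - 1) * dist w z.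
Proof.
  intros HD.
  pose proof (Rabs_pos (snd b - snd c)).
  pose proof (Rabs_pos (fst c - fst b)). pose proof (Rabs_pos (snd c - snd a)).
  pose proof (Rabs_pos (fst a - fst c)). pose proof (Rabs_pos (snd a - snd b)).
  pose proof (Rabs_pos (fst b - fst a)).
  replace (Kt a b c - 1) with ((Rabs (snd b - snd c) + Rabs (fst c - fst b) + Rabs (snd c - snd a) + Rabs (fst a - fst c)
   + Rabs (snd a - snd b) + Rabs (fst b - fst a)) / Rabs (cross a b c)) by (unfold Kt; ring).
  repeat split.
  - apply lip_helper with (snd b - snd c) (fst c - fst b); auto; [|lra].
    unfold lam1, cross. field. auto.
  - apply lip_helper with (snd c - snd a) (fst a - fst c); auto; [|lra].
    unfold lam2, cross. field. auto.
  - apply lip_helper with (snd a - snd b) (fst b - fst a); auto; [|lra].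
    unfold lam3, cross. field. auto.
Qed.

Lemma mlam_le a b c z : mlam a b c z <= lam1 a b c z /\ mlam a b c z <= lam2 a b c z /\ mlam a b c z <= lam3 a b c z.
Proof.
  unfold mlam. pose proof (Rmin_l (lam1 a b c z) (Rmin (lam2 a b c z) (lam3 a b c z))).
  pose proof (Rmin_r (lam1 a b c z) (Rmin (lam2 a b c z) (lam3 a b c z))).
  pose proof (Rmin_l (lam2 a b c z) (lam3 a b c z)). pose proof (Rmin_r (lam2 a b c z) (lam3 a b c z)).
  lra.
Qed.

Lemma mlam_pos a b c z : cross a b c <> 0 -> open_triangle a b c z -> 0 < mlam a b c z.
Proof.
  intros HD HG. apply G_iff in HG; auto. unfold mlam.
  apply Rmin_glb_lt; [|apply Rmin_glb_lt]; tauto.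
Qed.

Lemma lam_close a b c z w : cross a b c <> 0 -> open_triangle a b c z ->
  Kt a b c * dist z w < mlam a b c z -> open_triangle a b c w.
Proof.
  intros HD HG Hd. pose proof (Kt_pos a b c HD). pose proof (dist_ge0 z w).
  destruct (lam_lip a b c w z HD) as (L1 & L2 & L3). rewrite dist_sym in L1, L2, L3.
  destruct (mlam_le a b c z) as (M1 & M2 & M3).
  apply G_iff; auto.
  apply Rabs_le_inv in L1. apply Rabs_le_inv in L2. apply Rabs_le_inv in L3.
  repeat split; nra.
Qed.

Lemma vertex_boundary a b c : cross a b c <> 0 -> boundary (open_triangle a b c) a.
Proof.
  intros HD. replace a with (mk a b c 1 0 0) at 2.
  apply boundary_mk; auto; lra.
  unfold mk. destruct a; cbn [fst snd]. f_equal; ring.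
Qed.

Lemma dG_lower a b c z : cross a b c <> 0 -> open_triangle a b c z ->
  mlam a b c z / Kt a b c <= dG (open_triangle a b c) z.
Proof.
  intros HD HG. pose proof (Kt_pos a b c HD). unfold dG. apply Rinf_ge.
  - exists (dist z a). exists a. split; auto. apply vertex_boundary; auto.
  - intros r (y & [_ Hy] & ->).
    destruct (Rlt_or_le (Kt a b c * dist z y) (mlam a b c z)) as [Hl|Hl].
    + exfalso. apply Hy. eapply lam_close; eauto.
    + apply Rmult_le_reg_r with (Kt a b c); [lra|].
      unfold Rdiv. rewrite Rmult_assoc, Rinv_l by lra. lra.
Qed.

Lemma dG_pos a b c z : cross a b c <> 0 -> open_triangle a b c z -> 0 < dG (open_triangle a b c) z.
Proof.
  intros HD HG. eapply Rlt_le_trans; [|apply dG_lower; auto].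
  apply Rdiv_lt_0_compat. apply mlam_pos; auto. pose proof (Kt_pos a b c HD); lra.
Qed.

Lemma alg_key lam mu C : 0 <= lam -> lam <= mu -> -1 <= C <= 1 ->
  lam ^ 2 * (1 - C ^ 2) <= (lam ^ 2 + mu ^ 2 + 2 * lam * mu * C) * (1 - C) / 2.
Proof.
  intros H1 H2 H3.
  assert (0 <= (mu - lam) * (mu + lam + 2 * lam * C)) by (apply Rmult_le_pos; nra).
  nra.
Qed.

Definition Cang (a b c : pt) :=
  ((fst b - fst a) * (fst c - fst a) + (snd b - snd a) * (snd c - snd a)) / (dist a b * dist a c).

Lemma dist_pos_of_cross a b c : cross a b c <> 0 -> 0 < dist a b /\ 0 < dist a c.
Proof.
  intros HD. pose proof (dist_ge0 a b). pose proof (dist_ge0 a c).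
  pose proof (dist_sq a b). pose proof (dist_sq a c).
  pose proof (pow2_ge_0 (fst a - fst b)). pose proof (pow2_ge_0 (snd a - snd b)).
  pose proof (pow2_ge_0 (fst a - fst c)). pose proof (pow2_ge_0 (snd a - snd c)).
  split.
  - destruct H; auto. exfalso. apply HD. rewrite <- H in H1.
    assert (fst a - fst b = 0) by nra. assert (snd a - snd b = 0) by nra.
    unfold cross. nra.
  - destruct H0; auto. exfalso. apply HD. rewrite <- H0 in H2.
    assert (fst a - fst c = 0) by nra. assert (snd a - snd c = 0) by nra.
    unfold cross. nra.
Qed.

Lemma Cang_bound a b c : cross a b c <> 0 -> -1 < Cang a b c < 1.
Proof.
  intros HD. destruct (dist_pos_of_cross a b c HD) as [H1 H2].
  pose proof (dist_sq a b). pose proof (dist_sq a c).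
  set (P := (fst b - fst a) * (fst c - fst a) + (snd b - snd a) * (snd c - snd a)).
  assert (dist a b * dist a b * (dist a c * dist a c) = P * P + cross a b c * cross a b c).
  { rewrite H, H0. unfold P, cross. ring. }
  assert (0 < cross a b c * cross a b c) by (apply Rsqr_pos_lt; auto).
  assert (P * P < (dist a b * dist a c) * (dist a b * dist a c)) by nra.
  assert (Cang a b c * (dist a b * dist a c) = P) by (unfold Cang; fold P; field; lra).
  assert (0 < dist a b * dist a c) by nra.
  set (L := dist a b * dist a c) in *. set (C := Cang a b c) in *.
  assert (C * C * (L * L) < 1 * (L * L)).
  { replace (C * C * (L * L)) with ((C * L) * (C * L)) by ring. rewrite H6. lra. }
  apply Rmult_lt_reg_r in H8; [|nra].
  split; nra.
Qed.

Lemma sin_half_angle a b c : cross a b c <> 0 ->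
  sin (angle_at a b c / 2) = sqrt ((1 - Cang a b c) / 2).
Proof.
  intros HD. pose proof (Cang_bound a b c HD).
  unfold angle_at. fold (Cang a b c).
  set (th := acos (Cang a b c)).
  assert (0 <= th <= PI) by apply acos_bound.
  assert (cos th = Cang a b c) by (apply cos_acos; lra).
  pose proof (cos_2a_sin (th / 2)). replace (2 * (th / 2)) with th in H2 by field.
  assert (0 <= sin (th / 2)) by (apply sin_ge_0; pose proof PI_RGT_0; lra).
  symmetry. apply sqrt_lem_1. lra. auto. nra.
Qed.

Lemma sin_half_pos a b c : cross a b c <> 0 -> 0 < sin (angle_at a b c / 2).
Proof.
  intros HD. rewrite sin_half_angle by auto. pose proof (Cang_bound a b c HD).
  apply sqrt_lt_R0. lra.
Qed.

Lemma ot_rot a b c : open_triangle b c a = open_triangle a b c.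
Proof.
  apply functional_extensionality. intro x. apply propositional_extensionality.
  split; intros (l1 & l2 & l3 & H1 & H2 & H3 & Hs & Hx & Hy).
  - exists l3, l1, l2. repeat split; auto; lra.
  - exists l2, l3, l1. repeat split; auto; lra.
Qed.

Lemma ot_swap a b c : open_triangle a c b = open_triangle a b c.
Proof.
  apply functional_extensionality. intro x. apply propositional_extensionality.
  split; intros (l1 & l2 & l3 & H1 & H2 & H3 & Hs & Hx & Hy).
  - exists l1, l3, l2. repeat split; auto; lra.
  - exists l1, l3, l2. repeat split; auto; lra.
Qed.

Lemma cross_rot a b c : cross b c a = cross a b c.
Proof. unfold cross. ring. Qed.
Lemma cross_swap a b c : cross a c b = - cross a b c.
Proof. unfold cross. ring. Qed.
Lemma Cang_swap a b c : Cang a c b = Cang a b c.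
Proof. unfold Cang. rewrite (Rmult_comm (dist a c)). f_equal. ring. Qed.

Lemma half_vertex a b c z l1 l2 l3 : cross a b c <> 0 ->
  0 < l1 -> 0 < l2 -> 0 < l3 -> l1 + l2 + l3 = 1 ->
  fst z = l1 * fst a + l2 * fst b + l3 * fst c ->
  snd z = l1 * snd a + l2 * snd b + l3 * snd c ->
  l2 * dist a b <= l3 * dist a c -> dist a z <= dist a c ->
  dG (open_triangle a b c) z <= dist a z * sqrt ((1 - Cang a b c) / 2).
Proof.
  intros HD H1 H2 H3 Hs Hx Hy Hle Hr.
  destruct (dist_pos_of_cross a b c HD) as [HL1 HL2].
  pose proof (Cang_bound a b c HD) as HC.
  set (x1 := fst b - fst a). set (y1 := snd b - snd a).
  set (x2 := fst c - fst a). set (y2 := snd c - snd a).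
  set (L1 := dist a b) in *. set (L2 := dist a c) in *.
  assert (EL1 : L1 * L1 = x1 * x1 + y1 * y1) by (unfold L1; rewrite dist_sq; unfold x1, y1; ring).
  assert (EL2 : L2 * L2 = x2 * x2 + y2 * y2) by (unfold L2; rewrite dist_sq; unfold x2, y2; ring).
  set (P := x1 * x2 + y1 * y2).
  set (C := Cang a b c) in *.
  assert (EC : C * (L1 * L2) = P) by (unfold C, Cang; fold L1 L2; unfold P, x1, x2, y1, y2; field; lra).
  set (vx := fst z - fst a). set (vy := snd z - snd a).
  assert (Evx : vx = l2 * x1 + l3 * x2) by (unfold vx, x1, x2; rewrite Hx; replace l1 with (1 - l2 - l3) by lra; ring).
  assert (Evy : vy = l2 * y1 + l3 * y2) by (unfold vy, y1, y2; rewrite Hy; replace l1 with (1 - l2 - l3) by lra; ring).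
  set (r := dist a z) in *.
  assert (Er : r * r = vx * vx + vy * vy) by (unfold r; rewrite dist_sq; unfold vx, vy; ring).
  assert (0 <= r) by apply dist_ge0.
  set (VE := vx * x2 + vy * y2).
  assert (EVE : VE = l2 * P + l3 * (L2 * L2)) by (unfold VE; rewrite Evx, Evy, EL2; unfold P; ring).
  assert (0 < (C + 1) * (L1 * L2)) by (apply Rmult_lt_0_compat; nra).
  assert (HP : - (L1 * L2) <= P) by nra.
  assert (VE0 : 0 <= VE) by (rewrite EVE; nra).
  assert (VE * VE <= (r * r) * (L2 * L2)).
  { rewrite Er, EL2. unfold VE. pose proof (pow2_ge_0 (vx * y2 - vy * x2)). nra. }
  assert (r * r <= L2 * L2) by nra.
  assert (VE * VE <= (L2 * L2) * (L2 * L2)) by nra.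
  assert (VE1 : VE <= L2 * L2).
  { destruct (Rle_or_lt VE (L2 * L2)); auto. nra. }
  set (tau := VE / (L2 * L2)).
  assert (0 <= tau <= 1).
  { unfold tau. split. apply Rmult_le_pos; auto. left; apply Rinv_0_lt_compat; nra.
    apply Rmult_le_reg_r with (L2 * L2). nra. unfold Rdiv. rewrite Rmult_assoc, Rinv_l; nra. }
  set (p := mk a b c (1 - tau) 0 tau).
  assert (Hb : boundary (open_triangle a b c) p) by (apply boundary_mk; auto; lra).
  eapply Rle_trans. apply (dG_le _ _ _ z p Hb).
  set (S := sqrt ((1 - C) / 2)).
  assert (0 <= S) by apply sqrt_pos.
  assert (ES : S * S = (1 - C) / 2) by (apply sqrt_sqrt; lra).
  assert (Edp : dist z p * dist z p = (vx - tau * x2) ^ 2 + (vy - tau * y2) ^ 2).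
  { rewrite dist_sq. unfold p, mk, vx, vy, x2, y2; cbn [fst snd]. ring. }
  assert (Edp2 : dist z p * dist z p = (l2 * L1) ^ 2 * (1 - C ^ 2)).
  { rewrite Edp. unfold tau. replace ((l2 * L1) ^ 2 * (1 - C ^ 2)) with
     (l2 ^ 2 * (L1 * L1) - l2 ^ 2 * (C * (L1 * L2)) ^ 2 / (L2 * L2)) by (field; lra).
    rewrite EC, EL1, EVE, EL2. rewrite Evx, Evy. unfold P. field. nra. }
  assert (Er2 : r * r = (l2 * L1) ^ 2 + (l3 * L2) ^ 2 + 2 * (l2 * L1) * (l3 * L2) * C).
  { rewrite Er, Evx, Evy. replace (2 * (l2 * L1) * (l3 * L2) * C) with (2 * l2 * l3 * (C * (L1 * L2))) by ring.
    rewrite EC. replace ((l2 * L1) ^ 2) with (l2 * l2 * (L1 * L1)) by ring.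
    replace ((l3 * L2) ^ 2) with (l3 * l3 * (L2 * L2)) by ring. rewrite EL1, EL2. unfold P. ring. }
  pose proof (alg_key (l2 * L1) (l3 * L2) C ltac:(nra) Hle ltac:(lra)) as K.
  rewrite <- Edp2, <- Er2 in K.
  pose proof (dist_ge0 z p).
  assert (dist z p * dist z p <= (r * S) * (r * S)) by (replace ((r * S) * (r * S)) with (r * r * (S * S)) by ring; rewrite ES; lra).
  apply Rsqr_incr_0_var; unfold Rsqr; auto. apply Rmult_le_pos; auto.
Qed.

Lemma vertex_bound a b c z : cross a b c <> 0 -> open_triangle a b c z ->
  dist a z <= Rmin (dist a b) (dist a c) ->
  dG (open_triangle a b c) z <= dist a z * sin (angle_at a b c / 2).
Proof.
  intros HD HG Hr. rewrite sin_half_angle by auto.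
  pose proof (Rmin_l (dist a b) (dist a c)). pose proof (Rmin_r (dist a b) (dist a c)).
  destruct HG as (l1 & l2 & l3 & H1 & H2 & H3 & Hs & Hx & Hy).
  destruct (Rle_or_lt (l2 * dist a b) (l3 * dist a c)).
  - apply half_vertex with l1 l2 l3; auto; lra.
  - rewrite <- ot_swap, <- Cang_swap.
    apply half_vertex with l1 l3 l2; auto.
    + rewrite cross_swap. intro E. apply HD. lra.
    + lra.
    + rewrite Hx. ring.
    + rewrite Hy. ring.
    + lra.
    + lra.
Qed.

Lemma rsum_split n1 n2 f : rsum (n1 + n2) f = rsum n1 f + rsum n2 (fun i => f (n1 + i)%nat).
Proof.
  induction n2; simpl. rewrite Nat.add_0_r. ring.
  rewrite Nat.add_succ_r. simpl. rewrite IHn2. ring.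
Qed.

Lemma rsum_ext n f h : (forall i, (i < n)%nat -> f i = h i) -> rsum n f = rsum n h.
Proof. induction n; intros H; simpl; auto. rewrite IHn by (intros; apply H; lia). rewrite H by lia. auto. Qed.

Lemma rsum_le n f h : (forall i, (i < n)%nat -> f i <= h i) -> rsum n f <= rsum n h.
Proof. induction n; intros H; simpl. lra. pose proof (H n ltac:(lia)). pose proof (IHn ltac:(intros; apply H; lia)). lra. Qed.

Lemma rsum_ge0 n f : (forall i, (i < n)%nat -> 0 <= f i) -> 0 <= rsum n f.
Proof. intros H. replace 0 with (rsum n (fun _ => 0)). apply rsum_le; auto. induction n; simpl; auto. rewrite IHn. ring. intros; apply H; lia. Qed.

Lemma rsum_const n c : rsum n (fun _ => c) = INR n * c.
Proof. induction n; simpl rsum. simpl; ring. rewrite IHn, S_INR. ring. Qed.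

Lemma rsum_scale n k f : rsum n (fun i => k * f i) = k * rsum n f.
Proof. induction n; simpl. ring. rewrite IHn. ring. Qed.

Lemma part_mono u v n p : partition u v n p -> forall i j, (i <= j)%nat -> (j <= n)%nat -> p i <= p j.
Proof.
  intros (H0 & Hn & Hm) i j Hij Hjn. induction j.
  - assert (i = 0)%nat by lia. subst. lra.
  - destruct (Nat.eq_dec i (S j)). subst. lra.
    pose proof (IHj ltac:(lia) ltac:(lia)). pose proof (Hm j ltac:(lia)). lra.
Qed.

Lemma part_range u v n p : partition u v n p -> forall i, (i <= n)%nat -> u <= p i <= v.
Proof.
  intros Hp i Hi. pose proof (part_mono u v n p Hp 0 i ltac:(lia) Hi).
  pose proof (part_mono u v n p Hp i n Hi ltac:(lia)). destruct Hp as (HH0 & HHn & _).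
  rewrite HH0 in *. rewrite HHn in *. lra.
Qed.

Definition two (u v : R) : nat -> R := fun i => match i with O => u | _ => v end.
Lemma part_two u v : u <= v -> partition u v 1 (two u v).
Proof. intros H. split; [|split]; simpl; auto. intros i Hi. assert (i = 0)%nat by lia. subst. simpl. auto. Qed.

Definition cc (n1 : nat) (p1 p2 : nat -> R) : nat -> R :=
  fun i => if Nat.leb i n1 then p1 i else p2 (i - n1)%nat.

Lemma cc_partition u v w n1 n2 p1 p2 : partition u v n1 p1 -> partition v w n2 p2 ->
  partition u w (n1 + n2) (cc n1 p1 p2).
Proof.
  intros (A0 & An & Am) (B0 & Bn & Bm). unfold cc. split; [|split].
  - simpl. auto.
  - destruct (Nat.leb (n1 + n2) n1) eqn:E.
    + apply Nat.leb_le in E. assert (n2 = 0)%nat by lia. subst. rewrite Nat.add_0_r. congruence.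
    + replace (n1 + n2 - n1)%nat with n2 by lia. auto.
  - intros i Hi. destruct (Nat.leb i n1) eqn:E1; destruct (Nat.leb (S i) n1) eqn:E2.
    + apply Am. apply Nat.leb_le in E2. lia.
    + apply Nat.leb_le in E1. apply Nat.leb_gt in E2. assert (i = n1) by lia. subst i.
      replace (S n1 - n1)%nat with 1%nat by lia. rewrite An, <- B0. apply Bm. lia.
    + apply Nat.leb_gt in E1. apply Nat.leb_le in E2. lia.
    + apply Nat.leb_gt in E1. replace (S i - n1)%nat with (S (i - n1)) by lia. apply Bm. lia.
Qed.

Lemma cc_sum (F : R -> R -> R) n1 n2 p1 p2 : p1 n1 = p2 O ->
  rsum (n1 + n2) (fun i => F (cc n1 p1 p2 i) (cc n1 p1 p2 (S i))) =
  rsum n1 (fun i => F (p1 i) (p1 (S i))) + rsum n2 (fun i => F (p2 i) (p2 (S i))).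
Proof.
  intros Hj. rewrite rsum_split. f_equal.
  - apply rsum_ext. intros i Hi. unfold cc.
    replace (Nat.leb i n1) with true by (symmetry; apply Nat.leb_le; lia).
    replace (Nat.leb (S i) n1) with true by (symmetry; apply Nat.leb_le; lia). auto.
  - apply rsum_ext. intros i Hi. unfold cc.
    replace (Nat.leb (S (n1 + i)) n1) with false by (symmetry; apply Nat.leb_gt; lia).
    replace (S (n1 + i) - n1)%nat with (S i) by lia.
    destruct (Nat.leb (n1 + i) n1) eqn:E.
    + apply Nat.leb_le in E. assert (i = 0)%nat by lia. subst. rewrite Nat.add_0_r, Hj. auto.
    + replace (n1 + i - n1)%nat with i by lia. auto.
Qed.

Lemma chord_ge0 g n p : 0 <= chord_sum g n p.
Proof. unfold chord_sum. apply rsum_ge0. intros; apply dist_ge0. Qed.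

Lemma chord_sub_bound g M u v n p : (forall n p, partition 0 1 n p -> chord_sum g n p <= M) ->
  0 <= u -> v <= 1 -> partition u v n p -> chord_sum g n p <= M.
Proof.
  intros HM Hu Hv Hp.
  assert (u <= v). { pose proof (part_range _ _ _ _ Hp n (le_n n)). destruct Hp as (H0 & Hn & _). rewrite Hn in H. lra. }
  pose proof (cc_partition _ _ _ _ _ _ _ (part_two 0 u Hu) Hp) as P1.
  pose proof (cc_partition _ _ _ _ _ _ _ P1 (part_two v 1 Hv)) as P2.
  pose proof (HM _ _ P2) as HB. unfold chord_sum in HB.
  assert (E1 : cc 1 (two 0 u) p (1 + n) = v).
  { destruct Hp as (H0 & Hn & _). unfold cc. destruct (Nat.leb (1 + n) 1) eqn:E.
    - apply Nat.leb_le in E. assert (n = 0)%nat by lia. subst n. simpl. congruence.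
    - replace (1 + n - 1)%nat with n by lia. auto. }
  rewrite (cc_sum (fun s t => dist (g s) (g t))) in HB by (rewrite E1; reflexivity).
  rewrite (cc_sum (fun s t => dist (g s) (g t))) in HB by (destruct Hp as (H0 & _ & _); simpl; auto).
  pose proof (chord_ge0 g 1 (two 0 u)). pose proof (chord_ge0 g 1 (two v 1)).
  unfold chord_sum in *. lra.
Qed.

Lemma arclen_props g M u v : (forall n p, partition 0 1 n p -> chord_sum g n p <= M) ->
  0 <= u -> u <= v -> v <= 1 ->
  dist (g u) (g v) <= arclen g u v /\ arclen g u v <= M.
Proof.
  intros HM Hu Huv Hv. unfold arclen. split.
  - apply Rsup_ge.
    + exists M. intros L (n & p & Hp & ->). eapply chord_sub_bound; eauto.
    + exists 1%nat, (two u v). split. apply part_two; auto. unfold chord_sum. simpl. ring.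
  - apply Rsup_le.
    + exists (chord_sum g 1 (two u v)). exists 1%nat, (two u v). split; auto. apply part_two; auto.
    + intros L (n & p & Hp & ->). eapply chord_sub_bound; eauto.
Qed.

Lemma arclen_superadd g M u v w : (forall n p, partition 0 1 n p -> chord_sum g n p <= M) ->
  0 <= u -> u <= v -> v <= w -> w <= 1 ->
  arclen g u v + arclen g v w <= arclen g u w.
Proof.
  intros HM Hu Huv Hvw Hw.
  assert (Bd : forall x y, 0 <= x -> y <= 1 -> exists m, forall L, (exists n p, partition x y n p /\ L = chord_sum g n p) -> L <= m).
  { intros x y Hx Hy. exists M. intros L (n & p & Hp & ->). eapply chord_sub_bound; eauto. }
  assert (Ne : forall x y, x <= y -> exists L, (exists n p, partition x y n p /\ L = chord_sum g n p)).
  { intros x y Hxy. exists (chord_sum g 1 (two x y)), 1%nat, (two x y). split; auto. apply part_two; auto. }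
  assert (Key : forall c1 c2, (exists n p, partition u v n p /\ c1 = chord_sum g n p) ->
             (exists n p, partition v w n p /\ c2 = chord_sum g n p) -> c1 + c2 <= arclen g u w).
  { intros c1 c2 (n1 & p1 & Hp1 & ->) (n2 & p2 & Hp2 & ->). unfold arclen. apply Rsup_ge.
    apply Bd; lra. exists (n1 + n2)%nat, (cc n1 p1 p2). split. eapply cc_partition; eauto.
    unfold chord_sum. rewrite (cc_sum (fun s t => dist (g s) (g t))). auto.
    destruct Hp1 as (_ & -> & _). destruct Hp2 as (-> & _). auto. }
  assert (forall c2, (exists n p, partition v w n p /\ c2 = chord_sum g n p) -> arclen g u v <= arclen g u w - c2).
  { intros c2 H2. unfold arclen at 1. apply Rsup_le. apply Ne; auto. intros c1 H1. pose proof (Key c1 c2 H1 H2). lra. }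
  assert (arclen g v w <= arclen g u w - arclen g u v).
  { unfold arclen at 1. apply Rsup_le. apply Ne; auto. intros c2 H2. pose proof (H c2 H2). lra. }
  lra.
Qed.

Lemma sum_arclen g M n : (forall n p, partition 0 1 n p -> chord_sum g n p <= M) ->
  forall u v p, 0 <= u -> v <= 1 -> partition u v n p ->
  rsum n (fun i => arclen g (p i) (p (S i))) <= arclen g u v.
Proof.
  intros HM. induction n; intros u v p Hu Hv Hp.
  - simpl. destruct Hp as (H0 & Hn & _). rewrite H0 in Hn. subst v.
    pose proof (arclen_props g M u u HM Hu (Rle_refl u) Hv). pose proof (dist_ge0 (g u) (g u)). lra.
  - simpl. pose proof (part_range _ _ _ _ Hp n ltac:(lia)) as Rn.
    assert (Hp' : partition u (p n) n p).
    { destruct Hp as (H0 & Hn & Hm). split; [auto|split; [reflexivity|intros; apply Hm; lia]]. }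
    pose proof (IHn u (p n) p Hu ltac:(lra) Hp').
    destruct Hp as (H0 & Hn & Hm). pose proof (Hm n ltac:(lia)).
    pose proof (arclen_superadd g M u (p n) (p (S n)) HM Hu ltac:(lra) H1 ltac:(lra)).
    rewrite Hn in *. lra.
Qed.

Lemma Rabs_le_inv' x e : Rabs x < e -> - e < x < e.
Proof. intros H. pose proof (Rle_abs x). pose proof (Rle_abs (- x)). rewrite Rabs_Ropp in *. lra. Qed.

Definition rcont (phi : R -> R) : Prop :=
  forall t, 0 <= t <= 1 -> forall eps, 0 < eps -> exists delta, 0 < delta /\
    forall s, 0 <= s <= 1 -> Rabs (s - t) < delta -> Rabs (phi s - phi t) < eps.

Lemma rcont_lip g K (h : pt -> R) : curve_continuous g -> 0 <= K ->
  (forall u v, Rabs (h u - h v) <= K * dist u v) -> rcont (fun t => h (g t)).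
Proof.
  intros Hg HK Hh t Ht eps He.
  destruct (Hg t Ht (eps / (K + 1))) as (d & Hd & Hs).
  { apply Rdiv_lt_0_compat; lra. }
  exists d. split; auto. intros s Hs1 Hs2. pose proof (Hs s Hs1 Hs2).
  eapply Rle_lt_trans. apply Hh.
  assert (K * dist (g s) (g t) <= K * (eps / (K + 1))) by (apply Rmult_le_compat_l; lra).
  assert (K * (eps / (K + 1)) < eps).
  { apply Rmult_lt_reg_r with (K + 1). lra. replace (K * (eps / (K + 1)) * (K + 1)) with (K * eps) by (field; lra). nra. }
  lra.
Qed.

Definition clamp t := Rmax 0 (Rmin 1 t).
Lemma clamp_in t : 0 <= clamp t <= 1.
Proof. unfold clamp, Rmax, Rmin. repeat destruct Rle_dec; lra. Qed.
Lemma clamp_id t : 0 <= t <= 1 -> clamp t = t.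
Proof. intros. unfold clamp, Rmax, Rmin. repeat destruct Rle_dec; lra. Qed.
Lemma clamp_lip s t : Rabs (clamp s - clamp t) <= Rabs (s - t).
Proof.
  pose proof (Rle_abs (s - t)). pose proof (Rle_abs (- (s - t))). rewrite Rabs_Ropp in H0.
  apply Rabs_le. unfold clamp, Rmax, Rmin. repeat destruct Rle_dec; lra.
Qed.

Lemma evt_pos phi : rcont phi -> (forall t, 0 <= t <= 1 -> 0 < phi t) ->
  exists delta, 0 < delta /\ forall t, 0 <= t <= 1 -> delta <= phi t.
Proof.
  intros Hc Hp.
  assert (C : forall x, continuity_pt (fun t => phi (clamp t)) x).
  { intros x. unfold continuity_pt, continue_in, limit1_in, limit_in. simpl. unfold R_dist.
    intros eps He. destruct (Hc (clamp x) (clamp_in x) eps He) as (d & Hd & Hs).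
    exists d. split; auto. intros x' (_ & Hx'). apply Hs. apply clamp_in.
    eapply Rle_lt_trans. apply clamp_lip. auto. }
  destruct (continuity_ab_min (fun t => phi (clamp t)) 0 1 ltac:(lra) (fun c _ => C c)) as (mx & Hmx & _).
  exists (phi (clamp mx)). split. apply Hp, clamp_in.
  intros t Ht. pose proof (Hmx t Ht) as H. cbv beta in H. rewrite (clamp_id t Ht) in H. exact H.
Qed.

Lemma first_hit phi rho : rcont phi -> phi 0 < rho ->
  (exists t0, 0 <= t0 <= 1 /\ rho <= phi t0) ->
  exists tau, 0 <= tau <= 1 /\ phi tau = rho /\ forall t, 0 <= t < tau -> phi t < rho.
Proof.
  intros Hc H0 (t0 & Ht0 & Hr0).
  set (E := fun t => 0 <= t <= 1 /\ rho <= phi t).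
  assert (Hg : is_glb E (Rinf E)).
  { apply glb_exists. exists t0. split; auto. exists 0. intros x (Hx & _). lra. }
  set (tau := Rinf E) in *. destruct Hg as [Hlb Hgr].
  assert (T0 : 0 <= tau) by (apply Hgr; intros x (Hx & _); lra).
  assert (T1 : tau <= 1) by (pose proof (Hlb t0 (conj Ht0 Hr0)); lra).
  assert (Hbelow : forall t, 0 <= t < tau -> phi t < rho).
  { intros t Ht. destruct (Rlt_or_le (phi t) rho); auto. assert (E t) by (split; auto; lra).
    apply Hlb in H1. lra. }
  assert (Hge : rho <= phi tau).
  { destruct (Rle_or_lt rho (phi tau)); auto. exfalso.
    destruct (Hc tau (conj T0 T1) (rho - phi tau) ltac:(lra)) as (d & Hd & Hs).
    assert (tau + d <= tau).
    { apply Hgr. intros x (Hx & Hxr). destruct (Rle_or_lt (tau + d) x); auto.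
      assert (tau <= x) by (apply Hlb; split; auto).
      assert (Rabs (x - tau) < d) by (rewrite Rabs_pos_eq; lra).
      pose proof (Hs x Hx H3). apply Rabs_le_inv' in H4. lra. }
    lra. }
  exists tau. split; [lra|]. split; auto.
  destruct (Rle_or_lt (phi tau) rho) as [Hle|Hlt]; [lra|]. exfalso.
  assert (tau > 0) by (destruct (Req_dec tau 0) as [E0|E0]; [rewrite E0 in Hlt; lra | lra]).
  destruct (Hc tau (conj T0 T1) (phi tau - rho) ltac:(lra)) as (d & Hd & Hs).
  set (t := Rmax 0 (tau - d / 2)).
  assert (0 <= t) by apply Rmax_l.
  assert (t < tau) by (unfold t, Rmax; destruct Rle_dec; lra).
  assert (tau - d / 2 <= t) by apply Rmax_r.
  assert (Rabs (t - tau) < d) by (rewrite Rabs_left; lra).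
  pose proof (Hs t ltac:(lra) H4). pose proof (Hbelow t ltac:(lra)).
  apply Rabs_le_inv' in H5. lra.
Qed.

Lemma rcont_rev phi : rcont phi -> rcont (fun t => phi (1 - t)).
Proof.
  intros Hc t Ht eps He. destruct (Hc (1 - t) ltac:(lra) eps He) as (d & Hd & Hs).
  exists d. split; auto. intros s Hs1 Hs2. apply Hs. lra.
  replace (1 - s - (1 - t)) with (- (s - t)) by ring. rewrite Rabs_Ropp. auto.
Qed.

Lemma last_hit phi rho : rcont phi -> phi 1 < rho ->
  (exists t0, 0 <= t0 <= 1 /\ rho <= phi t0) ->
  exists sg, 0 <= sg <= 1 /\ phi sg = rho /\ forall t, sg < t <= 1 -> phi t < rho.
Proof.
  intros Hc H1 (t0 & Ht0 & Hr0).
  destruct (first_hit (fun t => phi (1 - t)) rho (rcont_rev phi Hc)) as (tau & Ht & Hv & Hb).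
  - replace (1 - 0) with 1 by ring. auto.
  - exists (1 - t0). split. lra. replace (1 - (1 - t0)) with t0 by ring. auto.
  - exists (1 - tau). split. lra. split. auto. intros t Hti.
    pose proof (Hb (1 - t) ltac:(lra)). cbv beta in H. replace (1 - (1 - t)) with t in H by ring. auto.
Qed.

Lemma Rle_min_compat a b x y : a <= x -> b <= y -> Rmin a b <= Rmin x y.
Proof. intros. unfold Rmin. repeat destruct Rle_dec; lra. Qed.

Lemma curve_dG_lb a b c g : cross a b c <> 0 -> curve_continuous g ->
  (forall t, 0 <= t <= 1 -> open_triangle a b c (g t)) ->
  exists delta, 0 < delta /\ forall t, 0 <= t <= 1 -> delta <= dG (open_triangle a b c) (g t).
Proof.
  intros HD Hg HG. pose proof (Kt_pos a b c HD) as HK.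
  assert (L1 : rcont (fun t => lam1 a b c (g t))).
  { apply rcont_lip with (Kt a b c - 1); auto. lra. intros u v. apply (lam_lip a b c u v HD). }
  assert (L2 : rcont (fun t => lam2 a b c (g t))).
  { apply rcont_lip with (Kt a b c - 1); auto. lra. intros u v. apply (lam_lip a b c u v HD). }
  assert (L3 : rcont (fun t => lam3 a b c (g t))).
  { apply rcont_lip with (Kt a b c - 1); auto. lra. intros u v. apply (lam_lip a b c u v HD). }
  destruct (evt_pos _ L1) as (d1 & Hd1 & H1).
  { intros t Ht. apply (G_iff a b c _ HD), HG; auto. }
  destruct (evt_pos _ L2) as (d2 & Hd2 & H2).
  { intros t Ht. apply (G_iff a b c _ HD), HG; auto. }
  destruct (evt_pos _ L3) as (d3 & Hd3 & H3).
  { intros t Ht. apply (G_iff a b c _ HD), HG; auto. }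
  exists (Rmin d1 (Rmin d2 d3) / Kt a b c). split.
  - apply Rdiv_lt_0_compat; [|lra]. apply Rmin_glb_lt; [|apply Rmin_glb_lt]; auto.
  - intros t Ht. eapply Rle_trans; [|apply dG_lower; auto].
    apply Rmult_le_compat_r. left; apply Rinv_0_lt_compat; lra.
    unfold mlam. apply Rle_min_compat; [apply H1; auto|].
    apply Rle_min_compat; [apply H2 | apply H3]; auto.
Qed.

Definition Inff (G : pt -> Prop) (g : R -> pt) (u v : R) : R :=
  Rinf (fun w => exists t, u <= t <= v /\ w = (fun x => / dG G x) (g t)).

Lemma Inff_props a b c g u v : cross a b c <> 0 ->
  (forall t, 0 <= t <= 1 -> open_triangle a b c (g t)) -> 0 <= u -> u <= v -> v <= 1 ->
  0 <= Inff (open_triangle a b c) g u v /\ Inff (open_triangle a b c) g u v <= / dG (open_triangle a b c) (g u).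
Proof.
  intros HD HG Hu Huv Hv. unfold Inff. split.
  - apply Rinf_ge. exists (/ dG (open_triangle a b c) (g u)). exists u. split; auto; lra.
    intros w (t & Ht & ->). left. apply Rinv_0_lt_compat. apply dG_pos; auto. apply HG; lra.
  - apply Rinf_le. exists 0. intros w (t & Ht & ->). left. apply Rinv_0_lt_compat. apply dG_pos; auto. apply HG; lra.
    exists u. split; auto; lra.
Qed.

Lemma Inff_lb a b c g u v B : cross a b c <> 0 ->
  (forall t, 0 <= t <= 1 -> open_triangle a b c (g t)) -> 0 <= u -> u <= v -> v <= 1 ->
  (forall t, u <= t <= v -> dG (open_triangle a b c) (g t) <= B) ->
  / B <= Inff (open_triangle a b c) g u v.
Proof.
  intros HD HG Hu Huv Hv HB. unfold Inff. apply Rinf_ge.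
  exists (/ dG (open_triangle a b c) (g u)). exists u. split; auto; lra.
  intros w (t & Ht & ->). apply Rinv_le_contravar. apply dG_pos; auto. apply HG; lra. apply HB; auto.
Qed.

Lemma qh_ge a b c g n p : cross a b c <> 0 -> curve_continuous g -> rectifiable g ->
  (forall t, 0 <= t <= 1 -> open_triangle a b c (g t)) -> partition 0 1 n p ->
  rsum n (fun i => Inff (open_triangle a b c) g (p i) (p (S i)) * arclen g (p i) (p (S i)))
  <= qh_length (open_triangle a b c) g.
Proof.
  intros HD Hc [M HM] HG Hp.
  destruct (curve_dG_lb a b c g HD Hc HG) as (dl & Hdl & Hdlb).
  unfold qh_length, line_integral. apply Rsup_ge.
  - exists (/ dl * M). intros S (n' & p' & Hp' & ->).
    apply Rle_trans with (rsum n' (fun i => / dl * arclen g (p' i) (p' (S i)))).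
    + apply rsum_le. intros i Hi.
      pose proof (part_range _ _ _ _ Hp' i ltac:(lia)). pose proof (part_range _ _ _ _ Hp' (S i) ltac:(lia)).
      destruct Hp' as (_ & _ & Hm). pose proof (Hm i Hi).
      pose proof (Inff_props a b c g (p' i) (p' (S i)) HD HG ltac:(lra) H1 ltac:(lra)) as [I0 I1].
      pose proof (arclen_props g M (p' i) (p' (S i)) HM ltac:(lra) H1 ltac:(lra)) as [A0 A1].
      pose proof (dist_ge0 (g (p' i)) (g (p' (S i)))).
      assert (/ dG (open_triangle a b c) (g (p' i)) <= / dl).
      { apply Rinv_le_contravar; [auto|apply Hdlb; lra]. }
      change (Inff (open_triangle a b c) g (p' i) (p' (S i)) * arclen g (p' i) (p' (S i)) <= / dl * arclen g (p' i) (p' (S i))).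
      apply Rmult_le_compat_r; lra.
    + rewrite rsum_scale. apply Rmult_le_compat_l; [left; apply Rinv_0_lt_compat; auto|].
      eapply Rle_trans. apply (sum_arclen g M n' HM 0 1 p' ltac:(lra) ltac:(lra) Hp').
      apply (arclen_props g M 0 1 HM); lra.
  - exists n, p. split; auto.
Qed.

Lemma rsum_telescope n (p : nat -> R) : rsum n (fun i => p (S i) - p i) = p n - p O.
Proof. induction n; simpl. ring. rewrite IHn. ring. Qed.

Lemma convex_pos X Y t : 0 < X -> 0 < Y -> 0 <= t <= 1 -> 0 < (1 - t) * X + t * Y.
Proof.
  intros HX HY Ht. assert (0 <= (1 - t) * X) by (apply Rmult_le_pos; lra).
  assert (0 <= t * Y) by (apply Rmult_le_pos; lra).
  destruct (Req_dec t 0). subst. lra. assert (0 < t * Y) by (apply Rmult_lt_0_compat; lra). lra.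
Qed.

Lemma segment_joins a b c x y : cross a b c <> 0 -> open_triangle a b c x -> open_triangle a b c y ->
  joins_in (open_triangle a b c) x y (lerp x y).
Proof.
  intros HD Hx Hy. apply (G_iff a b c _ HD) in Hx. apply (G_iff a b c _ HD) in Hy.
  pose proof (dist_ge0 x y).
  split; [|split; [|split; [|split]]].
  - intros t Ht eps He. exists (eps / (dist x y + 1)). split. apply Rdiv_lt_0_compat; lra.
    intros s Hs Hst. rewrite dist_lerp2.
    apply Rle_lt_trans with (eps / (dist x y + 1) * dist x y).
    apply Rmult_le_compat_r; lra.
    apply Rmult_lt_reg_r with (dist x y + 1). lra.
    replace (eps / (dist x y + 1) * dist x y * (dist x y + 1)) with (eps * dist x y) by (field; lra). nra.
  - exists (dist x y). intros n p Hp. unfold chord_sum.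
    rewrite (rsum_ext n _ (fun i => (p (S i) - p i) * dist x y)).
    + idtac.
      replace (rsum n (fun i => (p (S i) - p i) * dist x y)) with (rsum n (fun i => dist x y * (p (S i) - p i)))
        by (apply rsum_ext; intros; ring).
      rewrite rsum_scale, rsum_telescope. destruct Hp as (-> & -> & _). lra.
    + intros i Hi. rewrite dist_lerp2. destruct Hp as (_ & _ & Hm). pose proof (Hm i Hi).
      rewrite Rabs_left1 by lra. ring.
  - apply lerp0.
  - apply lerp1.
  - intros t Ht. apply (G_iff a b c _ HD).
    assert (forall x y, (1 - t) * x + t * y = (1 - t) * x + t * y) as _ by auto.
    unfold lam1, lam2, lam3 in *.
    replace (cross (lerp x y t) b c / cross a b c) with ((1 - t) * (cross x b c / cross a b c) + t * (cross y b c / cross a b c))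
      by (unfold cross, lerp; cbn [fst snd]; field; auto).
    replace (cross a (lerp x y t) c / cross a b c) with ((1 - t) * (cross a x c / cross a b c) + t * (cross a y c / cross a b c))
      by (unfold cross, lerp; cbn [fst snd]; field; auto).
    replace (cross a b (lerp x y t) / cross a b c) with ((1 - t) * (cross a b x / cross a b c) + t * (cross a b y / cross a b c))
      by (unfold cross, lerp; cbn [fst snd]; field; auto).
    destruct Hx as (X1 & X2 & X3). destruct Hy as (Y1 & Y2 & Y3).
    repeat split; apply convex_pos; auto.
Qed.

Lemma kG_lb a b c x y L : cross a b c <> 0 -> open_triangle a b c x -> open_triangle a b c y ->
  (forall g, joins_in (open_triangle a b c) x y g -> L <= qh_length (open_triangle a b c) g) ->
  L <= kG (open_triangle a b c) x y.
Proof.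
  intros HD Hx Hy H. unfold kG. apply Rinf_ge.
  - exists (qh_length (open_triangle a b c) (lerp x y)). exists (lerp x y). split; auto.
    apply segment_joins; auto.
  - intros w (g & Hg & ->). auto.
Qed.

Lemma term_lb a b c g M v S u w rho q : cross a b c <> 0 ->
  (forall n p, partition 0 1 n p -> chord_sum g n p <= M) ->
  (forall t, 0 <= t <= 1 -> open_triangle a b c (g t)) ->
  0 <= u -> u <= w -> w <= 1 -> 0 < rho -> 1 < q -> 0 < S ->
  (forall t, u <= t <= w -> dG (open_triangle a b c) (g t) <= dist v (g t) * S) ->
  (forall t, u <= t <= w -> dist v (g t) <= q * rho) ->
  q * rho - rho <= dist (g u) (g w) ->
  (1 - / q) / S <= Inff (open_triangle a b c) g u w * arclen g u w.
Proof.
  intros HD HM HG Hu Huw Hw Hr Hq HS Hv Hd Hdist.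
  assert (I : / (q * rho * S) <= Inff (open_triangle a b c) g u w).
  { apply Inff_lb; auto. intros t Ht. eapply Rle_trans. apply Hv; auto.
    apply Rmult_le_compat_r; [lra|]. apply Hd; auto. }
  pose proof (arclen_props g M u w HM Hu Huw Hw) as [A _].
  assert (0 < / (q * rho * S)) by (apply Rinv_0_lt_compat; apply Rmult_lt_0_compat; [nra|auto]).
  assert (/ (q * rho * S) * (q * rho - rho) <= Inff (open_triangle a b c) g u w * arclen g u w).
  { apply Rmult_le_compat; [lra| nra | auto | lra]. }
  replace ((1 - / q) / S) with (/ (q * rho * S) * (q * rho - rho)) by (field; lra). auto.
Qed.

Lemma dist_lip1 v : forall u w, Rabs (dist v u - dist v w) <= 1 * dist u w.
Proof.
  intros u w. rewrite Rmult_1_l. pose proof (dist_tri v u w). pose proof (dist_tri v w u).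
  rewrite (dist_sym w u) in H0. apply Rabs_le. lra.
Qed.

Lemma curve_bound a b c x y g q N R : cross a b c <> 0 -> 1 < q -> 0 < R ->
  2 * R < dist a b -> R <= Rmin (dist a b) (dist a c) -> R <= Rmin (dist b c) (dist b a) ->
  dist a x = R / q ^ N -> dist b y = R / q ^ N ->
  joins_in (open_triangle a b c) x y g ->
  INR N * ((1 - / q) * (/ sin (angle_at a b c / 2) + / sin (angle_at b c a / 2)))
  <= qh_length (open_triangle a b c) g.
Proof.
  intros HD Hq HR H2R HRa HRb Hx Hy Hg.
  destruct Hg as (Hc & Hrect & Hg0 & Hg1 & HG).
  destruct Hrect as [M HM].
  set (G := open_triangle a b c).
  set (Sa := sin (angle_at a b c / 2)). set (Sb := sin (angle_at b c a / 2)).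
  assert (HSa : 0 < Sa) by (apply sin_half_pos; auto).
  assert (HDb : cross b c a <> 0) by (rewrite cross_rot; auto).
  assert (HSb : 0 < Sb) by (apply sin_half_pos; auto).
  assert (VA : forall z, G z -> dist a z <= R -> dG G z <= dist a z * Sa).
  { intros z Hz Hz2. apply vertex_bound; auto. lra. }
  assert (VB : forall z, G z -> dist b z <= R -> dG G z <= dist b z * Sb).
  { intros z Hz Hz2. unfold G. rewrite <- (ot_rot a b c). apply vertex_bound; auto.
    rewrite ot_rot; auto. lra. }
  set (rho := fun k : nat => R * q ^ k / q ^ N).
  assert (qN : 0 < q ^ N) by (apply pow_lt; lra).
  assert (Rpos : forall k, 0 < rho k) by (intros k; unfold rho; apply Rdiv_lt_0_compat; [apply Rmult_lt_0_compat; auto; apply pow_lt; lra | auto]).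
  assert (RS : forall k, rho (S k) = q * rho k) by (intros k; unfold rho; simpl; field; lra).
  assert (R0 : rho 0%nat = R / q ^ N) by (unfold rho; simpl; field; lra).
  assert (RN : forall k, (k <= N)%nat -> rho k <= R).
  { intros k Hk. unfold rho. apply Rmult_le_reg_r with (q ^ N); auto.
    replace (R * q ^ k / q ^ N * q ^ N) with (R * q ^ k) by (field; lra).
    apply Rmult_le_compat_l; [lra|]. apply Rle_pow; [lra|auto]. }
  assert (R1 : forall k, (1 <= k)%nat -> rho 0%nat < rho k).
  { intros k Hk. unfold rho. apply Rmult_lt_compat_r. apply Rinv_0_lt_compat; auto.
    simpl. rewrite Rmult_1_r. pose proof (Rle_pow q 1 k ltac:(lra) Hk). simpl in H. nra. }
  set (pa := fun t => dist a (g t)). set (pb := fun t => dist b (g t)).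
  assert (Ca : rcont pa) by (apply rcont_lip with 1; auto; [lra| apply dist_lip1]).
  assert (Cb : rcont pb) by (apply rcont_lip with 1; auto; [lra| apply dist_lip1]).
  assert (pa0 : pa 0 = rho 0%nat) by (unfold pa; rewrite Hg0, R0; auto).
  assert (pb1 : pb 1 = rho 0%nat) by (unfold pb; rewrite Hg1, R0; auto).
  assert (pa1 : R <= pa 1).
  { unfold pa. rewrite Hg1. pose proof (dist_tri a y b). rewrite (dist_sym y b) in H.
    pose proof (RN 0%nat ltac:(lia)). rewrite R0 in H0. lra. }
  assert (pb0 : R <= pb 0).
  { unfold pb. rewrite Hg0. pose proof (dist_tri b x a). rewrite (dist_sym x a), (dist_sym b a) in H.
    pose proof (RN 0%nat ltac:(lia)). rewrite R0 in H0. lra. }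
  set (Pa := fun k tau => 0 <= tau <= 1 /\ pa tau = rho k /\ forall t, 0 <= t < tau -> pa t < rho k).
  set (Pb := fun k sg => 0 <= sg <= 1 /\ pb sg = rho k /\ forall t, sg < t <= 1 -> pb t < rho k).
  assert (Ea : forall k, (k <= N)%nat -> exists tau, Pa k tau).
  { intros k Hk. destruct k.
    - exists 0. split; [lra|]. split; auto. intros; lra.
    - apply first_hit; auto. rewrite pa0. apply R1; lia.
      exists 1. split; [lra|]. pose proof (RN (S k) Hk). lra. }
  assert (Eb : forall k, (k <= N)%nat -> exists sg, Pb k sg).
  { intros k Hk. destruct k.
    - exists 1. split; [lra|]. split; auto. intros; lra.
    - apply last_hit; auto. rewrite pb1. apply R1; lia.
      exists 0. split; [lra|]. pose proof (RN (S k) Hk). lra. }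
  set (tau := fun k => match k with O => 0 | S _ => epsilon (inhabits 0) (Pa k) end).
  set (sg := fun k => match k with O => 1 | S _ => epsilon (inhabits 0) (Pb k) end).
  assert (Ta : forall k, (k <= N)%nat -> Pa k (tau k)).
  { intros k Hk. destruct k. simpl. split; [lra|]. split; auto. intros; lra.
    apply epsilon_spec, Ea, Hk. }
  assert (Tb : forall k, (k <= N)%nat -> Pb k (sg k)).
  { intros k Hk. destruct k. simpl. split; [lra|]. split; auto. intros; lra.
    apply epsilon_spec, Eb, Hk. }
  assert (tau0 : tau 0%nat = 0) by reflexivity.
  assert (sg0 : sg 0%nat = 1) by reflexivity.
  assert (OA : forall k, (k < N)%nat -> tau k <= tau (S k) /\ forall t, tau k <= t <= tau (S k) -> pa t <= rho (S k)).
  { intros k Hk. destruct (Ta k ltac:(lia)) as (A1 & A2 & A3). destruct (Ta (S k) ltac:(lia)) as (B1 & B2 & B3).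
    pose proof (Rpos k). rewrite RS in *. split.
    - destruct (Rle_or_lt (tau k) (tau (S k))); auto. pose proof (A3 (tau (S k)) ltac:(lra)). nra.
    - intros t Ht. destruct (Req_dec t (tau (S k))). subst t. lra. left. apply B3. lra. }
  assert (OB : forall k, (k < N)%nat -> sg (S k) <= sg k /\ forall t, sg (S k) <= t <= sg k -> pb t <= rho (S k)).
  { intros k Hk. destruct (Tb k ltac:(lia)) as (A1 & A2 & A3). destruct (Tb (S k) ltac:(lia)) as (B1 & B2 & B3).
    pose proof (Rpos k). rewrite RS in *. split.
    - destruct (Rle_or_lt (sg (S k)) (sg k)); auto. pose proof (A3 (sg (S k)) ltac:(lra)). nra.
    - intros t Ht. destruct (Req_dec t (sg (S k))). subst t. lra. left. apply B3. lra. }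
  assert (MID : tau N <= sg N).
  { destruct (Ta N (le_n N)) as (A1 & A2 & A3). destruct (Tb N (le_n N)) as (B1 & B2 & B3).
    destruct (Rle_or_lt (tau N) (sg N)); auto. exfalso.
    pose proof (B3 (tau N) ltac:(lra)) as Z1.
    unfold pa, pb in *. pose proof (dist_tri a (g (tau N)) b) as Z2. rewrite (dist_sym (g (tau N)) b) in Z2.
    assert (rho N = R) by (unfold rho; field; lra). lra. }
  set (F := fun u v => Inff G g u v * arclen g u v).
  assert (TA : forall k, (k < N)%nat -> (1 - / q) / Sa <= F (tau k) (tau (S k))).
  { intros k Hk. destruct (OA k Hk) as [O1 O2].
    destruct (Ta k ltac:(lia)) as (A1 & A2 & A3). destruct (Ta (S k) ltac:(lia)) as (B1 & B2 & B3).
    unfold F. apply (term_lb a b c g M a Sa (tau k) (tau (S k)) (rho k) q); auto; try lra.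
    - intros t Ht. apply VA. apply HG; lra. pose proof (O2 t Ht). pose proof (RN (S k) ltac:(lia)). unfold pa in *. lra.
    - intros t Ht. rewrite <- RS. apply O2; auto.
    - rewrite <- RS. unfold pa in *. rewrite <- A2, <- B2. pose proof (dist_tri a (g (tau k)) (g (tau (S k)))). lra. }
  assert (TB : forall k, (k < N)%nat -> (1 - / q) / Sb <= F (sg (S k)) (sg k)).
  { intros k Hk. destruct (OB k Hk) as [O1 O2].
    destruct (Tb k ltac:(lia)) as (A1 & A2 & A3). destruct (Tb (S k) ltac:(lia)) as (B1 & B2 & B3).
    unfold F. apply (term_lb a b c g M b Sb (sg (S k)) (sg k) (rho k) q); auto; try lra.
    - intros t Ht. apply VB. apply HG; lra. pose proof (O2 t Ht). pose proof (RN (S k) ltac:(lia)). unfold pb in *. lra.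
    - intros t Ht. rewrite <- RS. apply O2; auto.
    - rewrite <- RS. unfold pb in *. rewrite <- A2, <- B2. pose proof (dist_tri b (g (sg (S k))) (g (sg k))).
      rewrite (dist_sym (g (sg (S k))) (g (sg k))). pose proof (dist_tri b (g (sg k)) (g (sg (S k)))). lra. }
  assert (PA : partition 0 (tau N) N tau).
  { split; auto. split; auto. intros i Hi. apply OA; auto. }
  assert (PM : partition (tau N) (sg N) 1 (two (tau N) (sg N))) by (apply part_two; auto).
  set (tb := fun i => sg (N - i)%nat).
  assert (PB : partition (sg N) 1 N tb).
  { unfold tb. split. f_equal; lia. split. replace (N - N)%nat with 0%nat by lia. auto.
    intros i Hi. replace (N - i)%nat with (S (N - S i)) by lia. apply OB. lia. }
  pose proof (cc_partition _ _ _ _ _ _ _ PM PB) as P2.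
  pose proof (cc_partition _ _ _ _ _ _ _ PA P2) as P3.
  pose proof (qh_ge a b c g _ _ HD Hc (ex_intro _ M HM) HG P3) as Q.
  fold G in Q.
  assert (E1 : rsum (N + (1 + N)) (fun i => Inff G g (cc N tau (cc 1 (two (tau N) (sg N)) tb) i)
      (cc N tau (cc 1 (two (tau N) (sg N)) tb) (S i)) *
      arclen g (cc N tau (cc 1 (two (tau N) (sg N)) tb) i) (cc N tau (cc 1 (two (tau N) (sg N)) tb) (S i)))
    = rsum N (fun i => F (tau i) (tau (S i))) + rsum (1 + N) (fun i => F (cc 1 (two (tau N) (sg N)) tb i) (cc 1 (two (tau N) (sg N)) tb (S i)))).
  { apply (cc_sum F). reflexivity. }
  assert (E2 : rsum (1 + N) (fun i => F (cc 1 (two (tau N) (sg N)) tb i) (cc 1 (two (tau N) (sg N)) tb (S i)))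
    = rsum 1 (fun i => F (two (tau N) (sg N) i) (two (tau N) (sg N) (S i))) + rsum N (fun i => F (tb i) (tb (S i)))).
  { apply (cc_sum F). unfold tb. simpl. f_equal. lia. }
  rewrite E1, E2 in Q. simpl rsum at 2 in Q.
  assert (Fm : 0 <= F (tau N) (sg N)).
  { unfold F. destruct (Ta N (le_n N)) as (A1 & _). destruct (Tb N (le_n N)) as (B1 & _).
    pose proof (Inff_props a b c g (tau N) (sg N) HD HG ltac:(lra) MID ltac:(lra)) as [I0 _]. fold G in I0.
    pose proof (arclen_props g M (tau N) (sg N) HM ltac:(lra) MID ltac:(lra)) as [A0 _].
    pose proof (dist_ge0 (g (tau N)) (g (sg N))). apply Rmult_le_pos; lra. }
  assert (SA : INR N * ((1 - / q) / Sa) <= rsum N (fun i => F (tau i) (tau (S i)))).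
  { rewrite <- rsum_const. apply rsum_le. auto. }
  assert (SB : INR N * ((1 - / q) / Sb) <= rsum N (fun i => F (tb i) (tb (S i)))).
  { rewrite <- rsum_const. apply rsum_le. intros i Hi. unfold tb.
    replace (N - i)%nat with (S (N - S i)) by lia. apply TB. lia. }
  replace (INR N * ((1 - / q) * (/ Sa + / Sb))) with (INR N * ((1 - / q) / Sa) + INR N * ((1 - / q) / Sb)) by (field; lra).
  lra.
Qed.

Lemma ln_le' u v : 0 < u -> u <= v -> ln u <= ln v.
Proof. intros H1 H2. destruct H2. left. apply ln_increasing; auto. subst. lra. Qed.

Lemma ln_le_sub1 q : 1 < q -> ln q <= q - 1.
Proof.
  intros Hq. destruct (Rle_or_lt (ln q) 0). lra.
  pose proof (exp_ineq1 (ln q) ltac:(lra)). rewrite exp_ln in H0; lra.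
Qed.

Lemma lerp_cen_a a b c l : lerp a (cen a b c) l = mk a b c (1 - 2 * l / 3) (l / 3) (l / 3).
Proof. unfold lerp, cen, mk; cbn [fst snd]. f_equal; field. Qed.
Lemma lerp_cen_b a b c l : lerp b (cen a b c) l = mk a b c (l / 3) (1 - 2 * l / 3) (l / 3).
Proof. unfold lerp, cen, mk; cbn [fst snd]. f_equal; field. Qed.

Lemma endpoint_bounds a b c l : cross a b c <> 0 -> 0 < l <= 1 ->
  open_triangle a b c (mk a b c (1 - 2 * l / 3) (l / 3) (l / 3)) /\
  l / 3 / Kt a b c <= dG (open_triangle a b c) (mk a b c (1 - 2 * l / 3) (l / 3) (l / 3)).
Proof.
  intros HD Hl. assert (HG : open_triangle a b c (mk a b c (1 - 2 * l / 3) (l / 3) (l / 3))) by (apply G_mk; lra).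
  split; auto. eapply Rle_trans; [|apply dG_lower; auto].
  pose proof (Kt_pos a b c HD). apply Rmult_le_compat_r. left; apply Rinv_0_lt_compat; lra.
  destruct (lam_mk a b c (1 - 2 * l / 3) (l / 3) (l / 3) HD ltac:(lra)) as (E1 & E2 & E3).
  unfold mlam. rewrite E1, E2, E3. unfold Rmin. repeat destruct Rle_dec; lra.
Qed.

Lemma endpoint_bounds_b a b c l : cross a b c <> 0 -> 0 < l <= 1 ->
  open_triangle a b c (mk a b c (l / 3) (1 - 2 * l / 3) (l / 3)) /\
  l / 3 / Kt a b c <= dG (open_triangle a b c) (mk a b c (l / 3) (1 - 2 * l / 3) (l / 3)).
Proof.
  intros HD Hl. assert (HG : open_triangle a b c (mk a b c (l / 3) (1 - 2 * l / 3) (l / 3))) by (apply G_mk; lra).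
  split; auto. eapply Rle_trans; [|apply dG_lower; auto].
  pose proof (Kt_pos a b c HD). apply Rmult_le_compat_r. left; apply Rinv_0_lt_compat; lra.
  destruct (lam_mk a b c (l / 3) (1 - 2 * l / 3) (l / 3) HD ltac:(lra)) as (E1 & E2 & E3).
  unfold mlam. rewrite E1, E2, E3. unfold Rmin. repeat destruct Rle_dec; lra.
Qed.

Theorem theorem1p7 (a b c : pt) :
  cross a b c <> 0 ->
  angle_at a b c <= angle_at b c a ->
  angle_at b c a <= angle_at c a b ->
  uniformity_const_ge (open_triangle a b c)
    (/ sin (angle_at a b c / 2) + / sin (angle_at b c a / 2)).
Proof.
  intros HD _ _ A [HA1 HA].
  set (G := open_triangle a b c) in *.
  set (c0 := / sin (angle_at a b c / 2) + / sin (angle_at b c a / 2)).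
  assert (HDb : cross b c a <> 0) by (rewrite cross_rot; auto).
  destruct (dist_pos_of_cross a b c HD) as [Dab Dac].
  destruct (dist_pos_of_cross b c a HDb) as [Dbc Dba].
  set (cn := cen a b c).
  assert (Gc : G cn) by (apply G_mk; lra).
  assert (d0p : 0 < dist a cn).
  { pose proof (dG_pos a b c cn HD Gc). pose proof (dG_le a b c cn a (vertex_boundary a b c HD)).
    rewrite dist_sym in H0. fold G in H, H0. lra. }
  assert (d1p : 0 < dist b cn).
  { pose proof (dG_pos a b c cn HD Gc).
    assert (boundary G b) by (unfold G; rewrite <- (ot_rot a b c); apply vertex_boundary; auto).
    pose proof (dG_le a b c cn b H0). rewrite dist_sym in H1. fold G in H, H1. lra. }
  set (d0 := dist a cn) in *. set (d1 := dist b cn) in *.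
  set (R := Rmin (Rmin (dist a b) (dist a c)) (Rmin (Rmin (dist b c) (dist b a)) (Rmin d0 d1)) / 3).
  assert (Rp : 0 < R).
  { unfold R. apply Rdiv_lt_0_compat; [|lra].
    repeat apply Rmin_glb_lt; auto. }
  set (m1 := Rmin (dist a b) (dist a c)). set (m2 := Rmin (dist b c) (dist b a)).
  assert (Hm : Rmin m1 (Rmin m2 (Rmin d0 d1)) = 3 * R) by (unfold R; fold m1 m2; field).
  pose proof (Rmin_l m1 (Rmin m2 (Rmin d0 d1))). pose proof (Rmin_r m1 (Rmin m2 (Rmin d0 d1))).
  pose proof (Rmin_l m2 (Rmin d0 d1)). pose proof (Rmin_r m2 (Rmin d0 d1)).
  pose proof (Rmin_l d0 d1). pose proof (Rmin_r d0 d1).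
  pose proof (Rmin_l (dist a b) (dist a c)). fold m1 in H5.
  assert (HRa : R <= m1) by lra. assert (HRb : R <= m2) by lra.
  assert (H2R : 2 * R < dist a b) by lra.
  assert (Hd0 : R < d0) by lra. assert (Hd1 : R < d1) by lra.
  pose proof (Kt_pos a b c HD) as HK.
  set (Dxy := R + dist a b + R).
  set (W := Dxy * (3 * Kt a b c * (d0 + d1)) / R).
  assert (W0 : 0 <= W).
  { unfold W, Dxy. apply Rmult_le_pos; [|left; apply Rinv_0_lt_compat; auto].
    apply Rmult_le_pos; [lra|]. apply Rmult_le_pos; lra. }
  assert (Main : forall q N, 1 < q ->
     INR N * ((1 - / q) * c0) <= A * (ln (1 + W) + INR N * ln q)).
  { intros q N Hq.
    assert (qN : 0 < q ^ N) by (apply pow_lt; lra).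
    assert (qN1 : 1 <= q ^ N) by (apply pow_R1_Rle; lra).
    set (la := R / (d0 * q ^ N)). set (lb := R / (d1 * q ^ N)).
    assert (la0 : 0 < la) by (unfold la; apply Rdiv_lt_0_compat; nra).
    assert (lb0 : 0 < lb) by (unfold lb; apply Rdiv_lt_0_compat; nra).
    assert (la1 : la <= 1).
    { unfold la. apply Rmult_le_reg_r with (d0 * q ^ N). nra.
      replace (R / (d0 * q ^ N) * (d0 * q ^ N)) with R by (field; lra). nra. }
    assert (lb1 : lb <= 1).
    { unfold lb. apply Rmult_le_reg_r with (d1 * q ^ N). nra.
      replace (R / (d1 * q ^ N) * (d1 * q ^ N)) with R by (field; lra). nra. }
    set (x := lerp a cn la). set (y := lerp b cn lb).
    assert (Hxd : dist a x = R / q ^ N).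
    { unfold x. rewrite dist_lerp. fold d0. rewrite Rabs_pos_eq by lra. unfold la. field. lra. }
    assert (Hyd : dist b y = R / q ^ N).
    { unfold y. rewrite dist_lerp. fold d1. rewrite Rabs_pos_eq by lra. unfold lb. field. lra. }
    destruct (endpoint_bounds a b c la HD (conj la0 la1)) as [Gx Dx].
    destruct (endpoint_bounds_b a b c lb HD (conj lb0 lb1)) as [Gy Dy].
    unfold cn in x, y. rewrite <- lerp_cen_a in Gx, Dx. rewrite <- lerp_cen_b in Gy, Dy.
    fold cn x y G in Gx, Dx, Gy, Dy.
    assert (Kb : INR N * ((1 - / q) * c0) <= kG G x y).
    { apply kG_lb; auto. intros g Hg. apply curve_bound with x y R; auto. }
    set (m0 := R / (3 * Kt a b c * (d0 + d1) * q ^ N)).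
    assert (m0p : 0 < m0) by (unfold m0; apply Rdiv_lt_0_compat; auto; apply Rmult_lt_0_compat; [|auto]; nra).
    assert (Mx : m0 <= dG G x).
    { eapply Rle_trans; [|apply Dx]. unfold m0, la.
      apply Rle_trans with (R / (d0 * q ^ N) / 3 / Kt a b c); [|lra].
      replace (R / (d0 * q ^ N) / 3 / Kt a b c) with (R / (3 * Kt a b c * d0 * q ^ N)) by (field; split; lra).
      apply Rmult_le_compat_l; [lra|]. apply Rinv_le_contravar. apply Rmult_lt_0_compat; [|auto]; nra.
      apply Rmult_le_compat_r; [lra|]. apply Rmult_le_compat_l; nra. }
    assert (My : m0 <= dG G y).
    { eapply Rle_trans; [|apply Dy]. unfold m0, lb.
      apply Rle_trans with (R / (d1 * q ^ N) / 3 / Kt a b c); [|lra].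
      replace (R / (d1 * q ^ N) / 3 / Kt a b c) with (R / (3 * Kt a b c * d1 * q ^ N)) by (field; split; lra).
      apply Rmult_le_compat_l; [lra|]. apply Rinv_le_contravar. apply Rmult_lt_0_compat; [|auto]; nra.
      apply Rmult_le_compat_r; [lra|]. apply Rmult_le_compat_l; nra. }
    assert (Mm : m0 <= Rmin (dG G x) (dG G y)) by (apply Rmin_glb; auto).
    assert (Dxy_b : dist x y <= Dxy).
    { unfold Dxy. pose proof (dist_tri x a y). pose proof (dist_tri a b y).
      rewrite (dist_sym x a) in H6. pose proof (RN_dummy := tt). clear RN_dummy.
      assert (R / q ^ N <= R).
      { apply Rmult_le_reg_r with (q ^ N); auto. replace (R / q ^ N * q ^ N) with R by (field; lra). nra. }
      lra. }
    assert (Jb : jG G x y <= ln (1 + W) + INR N * ln q).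
    { unfold jG. rewrite <- ln_pow by lra. rewrite <- ln_mult by (try apply pow_lt; lra).
      apply ln_le'.
      - pose proof (dist_ge0 x y). assert (0 < Rmin (dG G x) (dG G y)) by lra.
        assert (0 <= dist x y / Rmin (dG G x) (dG G y)) by (apply Rmult_le_pos; [lra| left; apply Rinv_0_lt_compat; lra]). lra.
      - assert (dist x y / Rmin (dG G x) (dG G y) <= Dxy / m0).
        { pose proof (dist_ge0 x y). unfold Rdiv. apply Rmult_le_compat; try lra.
          left; apply Rinv_0_lt_compat; lra. apply Rinv_le_contravar; auto. }
        assert (Dxy / m0 = W * q ^ N) by (unfold W, m0; field; repeat split; lra).
        nra. }
    pose proof (HA x y Gx Gy).
    assert (A * jG G x y <= A * (ln (1 + W) + INR N * ln q)) by (apply Rmult_le_compat_l; lra).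
    lra. }
  assert (Lq : forall q, 1 < q -> (1 - / q) * c0 <= A * ln q).
  { intros q Hq. destruct (Rle_or_lt ((1 - / q) * c0) (A * ln q)); auto. exfalso.
    destruct (INR_archimed ((1 - / q) * c0 - A * ln q) (A * ln (1 + W)) ltac:(lra)) as [N HN].
    pose proof (Main q N Hq). nra. }
  assert (Aq : forall q, 1 < q -> c0 <= A * q).
  { intros q Hq. pose proof (Lq q Hq). pose proof (ln_le_sub1 q Hq).
    assert (A * ln q <= A * (q - 1)) by (apply Rmult_le_compat_l; lra).
    assert ((1 - / q) * c0 = (q - 1) * c0 / q) by (field; lra).
    assert ((q - 1) * c0 <= (q - 1) * (A * q)).
    { apply Rmult_le_reg_r with (/ q). apply Rinv_0_lt_compat; lra.
      replace ((q - 1) * (A * q) * / q) with (A * (q - 1)) by (field; lra). unfold Rdiv in H1. lra. }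
    apply Rmult_le_reg_l with (q - 1); lra. }
  destruct (Rle_or_lt c0 A) as [Hfin|Hfin]; auto. exfalso.
  assert (Q1 : 1 < (A + c0) / (2 * A)).
  { apply Rmult_lt_reg_r with (2 * A); [lra|].
    replace ((A + c0) / (2 * A) * (2 * A)) with (A + c0) by (field; lra). lra. }
  pose proof (Aq _ Q1) as Hq1.
  replace (A * ((A + c0) / (2 * A))) with ((A + c0) / 2) in Hq1 by (field; lra). lra.
Qed.
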